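(* Assume $\operatorname{rank}(X)=n$ and that $\xi_r(\varpi^N)<1/2$ for some $r\in\{0,\ldots,N\}$; set $r^*(\varpi^N)=\max\{r\in\{0,\ldots,N\}:\xi_r(\varpi^N)<1/2\}$. Suppose there exists $\tilde A\in\mathbb{R}^{n\times s}$ with pairwise distinct columns such that $\min_{i\in\mathbb{S}}|I_i(\tilde A)|\ge s\,\nu_n(X)$ and $\|\phi(\tilde A)\|_0\le r^*(\varpi^N)$. Then $\Psi(\varpi^N)=\{\mathrm{set}(\tilde A)\}$.
   Context: Data: integers $n,s,N\ge1$ and a dataset $\varpi^N=((x_1,y_1),\ldots,(x_N,y_N))$ with $x_t\in\mathbb{R}^n$, $y_t\in\mathbb{R}$; $X=[x_1\ \cdots\ x_N]\in\mathbb{R}^{n\times N}$. Let $\mathbb{T}=\{1,\ldots,N\}$, $\mathbb{S}=\{1,\ldots,s\}$. For $A=[a_1\ \cdots\ a_s]\in\mathbb{R}^{n\times s}$, $\mathrm{set}(A)=\{a_1,\ldots,a_s\}$; $\sigma_A:\mathbb{T}\to\mathbb{S}$ is a switching signal satisfying $\sigma_A(t)\in\arg\min_{i\in\mathbb{S}}|y_t-x_t^\top a_i|$ for all $t$, selected uniquely by a fixed rule depending only on $A$ and the data (among all admissible choices, one maximizing $\min_{i}|I_i(A)|$, ties then broken by assigning the smallest admissible index). $I_i(A)=\{t\in\mathbb{T}:\sigma_A(t)=i\}$. $\phi(A)=\big(y_1-x_1^\top a_{\sigma_A(1)},\ldots,y_N-x_N^\top a_{\sigma_A(N)}\big)^\top$,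 $\mathcal{J}(A)=\|\phi(A)\|_1=\sum_t\min_i|y_t-a_i^\top x_t|$, and $\phi_{\mathcal{T}}(A)$ its subvector indexed by $\mathcal{T}\subset\mathbb{T}$. $\|w\|_0$ is the number of nonzero entries. The LSM estimator is $\Psi(\varpi^N)=\{\mathrm{set}(\hat A):\hat A\in\arg\min_{A\in\mathbb{R}^{n\times s}}\mathcal{J}(A)\}$. The $r$-th concentration ratio is $$\xi_r(\varpi^N)=\sup\Big\{\frac{\|\phi_{\mathcal{T}}(A)-\phi_{\mathcal{T}}(A')\|_1}{\|\phi(A)-\phi(A')\|_1}: A,A'\in\mathbb{R}^{n\times s},\ \mathcal{T}\subset\mathbb{T},\ \phi(A)\ne\phi(A'),\ |\mathcal{T}|\le r\Big\}.$$ Genericity index: for $\operatorname{rank}(X)=n$, $\nu_n(X)$ is the smallest integer $m$ such that every submatrix $X_{\mathcal{S}}$ formed by $m$ columns of $X$ ($\mathcal{S}\subset\mathbb{T}$, $|\mathcal{S}|=m$) has rank $n$. *)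

(* Defs.v *)
From HB Require Import structures.
From mathcomp Require Import all_boot all_order all_algebra.
From mathcomp Require Import classical_sets reals.

Set Implicit Arguments.
Unset Strict Implicit.
Unset Printing Implicit Defensive.

Import Order.TTheory GRing.Theory Num.Theory.
Local Open Scope ring_scope.

Section LSM.
Variables (R : realType) (n s N : nat).
(* Data: X = [x_1 ... x_N] (column t of X is x_t), y = (y_1,...,y_N). *)
Variables (X : 'M[R]_(n, N)) (y : 'rV[R]_N).

Definition res (A : 'M[R]_(n, s)) (t : 'I_N) (i : 'I_s) : R :=
  y 0 t - \sum_(k < n) X k t * A k i.

Definition admissible (A : 'M[R]_(n, s)) (f : {ffun 'I_N -> 'I_s}) : bool :=
  [forall t, forall i, `|res A t (f t)| <= `|res A t i|].

(* min_i |I_i| for a signal f (default N is >= every count, so for s >= 1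
   this is the true minimum) *)
Definition min_card (f : {ffun 'I_N -> 'I_s}) : nat :=
  \big[minn/N]_(i < s) #|[set t | f t == i]|.

Definition optimal (A : 'M[R]_(n, s)) (f : {ffun 'I_N -> 'I_s}) : bool :=
  admissible A f &&
  [forall g : {ffun 'I_N -> 'I_s}, admissible A g ==> (min_card g <= min_card f)%N].

(* base-s code of f, with f(first index) the most significant digit:
   comparing codes = lexicographic comparison of (f t_1, ..., f t_N) *)
Definition lex_code (f : {ffun 'I_N -> 'I_s}) : nat :=
  (\sum_(t < N) f t * s ^ (N.-1 - t))%N.

Definition chosen (A : 'M[R]_(n, s)) (f : {ffun 'I_N -> 'I_s}) : bool :=
  optimal A f &&
  [forall g : {ffun 'I_N -> 'I_s}, optimal A g ==> (lex_code f <= lex_code g)%N].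

(* sigma_A ; it is [Some _] whenever s >= 1 *)
Definition sigma (A : 'M[R]_(n, s)) : option {ffun 'I_N -> 'I_s} :=
  [pick f | chosen A f].

Definition sigma_at (A : 'M[R]_(n, s)) (t : 'I_N) : option 'I_s :=
  omap (fun f : {ffun 'I_N -> 'I_s} => f t) (sigma A).

Definition Iset (A : 'M[R]_(n, s)) (i : 'I_s) : {set 'I_N} :=
  [set t | sigma_at A t == Some i].

(* phi(A) (the [None] branch never occurs when s >= 1) *)
Definition phi (A : 'M[R]_(n, s)) (t : 'I_N) : R :=
  match sigma_at A t with Some i => res A t i | None => y 0 t end.

Definition J (A : 'M[R]_(n, s)) : R := \sum_(t < N) `|phi A t|.

Definition norm0 (w : 'I_N -> R) : nat := #|[set t | w t != 0]|.

Definition colset (A : 'M[R]_(n, s)) : set 'cV[R]_n :=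
  range (fun i : 'I_s => col i A).

Definition Psi : set (set 'cV[R]_n) :=
  [set S | exists Ahat : 'M[R]_(n, s),
     (forall A : 'M[R]_(n, s), J Ahat <= J A) /\ S = colset Ahat]%classic.

Definition xi (r : nat) : R :=
  sup [set q : R | exists (A A' : 'M[R]_(n, s)) (T : {set 'I_N}),
        phi A <> phi A' /\ (#|T| <= r)%N /\
        q = (\sum_(t in T) `|phi A t - phi A' t|) /
            (\sum_(t < N) `|phi A t - phi A' t|)]%classic.

Definition rstar : nat := \max_(r < N.+1 | (xi r < 1 / 2)%R) r.

Definition good_m (m : nat) : bool :=
  [forall S : {set 'I_N}, (#|S| == m) ==>
     (\rank (colsub (fun j : 'I_#|S| => enum_val j) X) == n)].

(* genericity index nu_n(X): the smallest such m (N is one when rank X = n) *)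
Definition nu : nat := (\big[minn/N]_(m < N.+1 | good_m m) m)%N.

End LSM.

(* Main.v *)
Require Import Defs.
From HB Require Import structures.
From mathcomp Require Import all_boot all_order all_algebra.
From mathcomp Require Import classical_sets reals.
From mathcomp Require Import lra zify.
Import Order.TTheory GRing.Theory Num.Theory.
Local Open Scope ring_scope.
Lemma sigma_some (R : realType) (n s N : nat) (X : 'M[R]_(n, N)) (y : 'rV[R]_N)
  (hs : (0 < s)%N) (A : 'M[R]_(n, s)) :
  exists f, sigma X y A = Some f /\ admissible X y A f.
Proof.
pose i0 : 'I_s := Ordinal hs.
pose f0 : {ffun 'I_N -> 'I_s} :=
  [ffun t => extremum (fun a b : R => a <= b) i0 xpredT (fun i => `|res X y A t i|)].
have adm0 : admissible X y A f0.
  apply/forallP => t; apply/forallP => i; rewrite ffunE.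
  case: extremumP => //.
  - by move=> a b c; exact: (@le_trans _ R).
  - by move=> a b; exact: (@le_total _ R).
  by move=> j _ Hj; exact: Hj.
pose f1 := fintype.arg_max f0 (admissible X y A) (@min_card s N).
have opt1 : optimal X y A f1.
  rewrite /f1; case: arg_maxnP => // g Hg Hmax.
  apply/andP; split => //; apply/forallP => h; apply/implyP => Hh; exact: Hmax.
pose f2 := fintype.arg_min f1 (optimal X y A) (@lex_code s N).
have ch2 : chosen X y A f2.
  rewrite /f2; case: arg_minnP => // g Hg Hmin.
  apply/andP; split => //; apply/forallP => h; apply/implyP => Hh; exact: Hmin.
rewrite /sigma; case: pickP => [f Hf | H]; last by move: (H f2); rewrite ch2.
exists f; split => //; by case/andP: Hf => /andP [].
Qed.
Lemma ratio_le1 (R : realType) (N : nat) (T : {set 'I_N}) (f : 'I_N -> R) :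
  (\sum_(t in T) `|f t|) / (\sum_(t < N) `|f t|) <= 1.
Proof.
have H : \sum_(t in T) `|f t| <= \sum_(t < N) `|f t|.
  rewrite big_mkcond /=; apply: ler_sum => t _; case: ifP => // _.
have H0 : 0 <= \sum_(t in T) `|f t| by apply: sumr_ge0.
have [->|hd] := eqVneq (\sum_(t < N) `|f t|) 0; first by rewrite invr0 mulr0.
have hp : 0 < \sum_(t < N) `|f t|.
  by rewrite lt0r hd /=; apply: sumr_ge0.
by rewrite ler_pdivrMr // mul1r.
Qed.

Lemma key (R : realType) (n s N : nat) (X : 'M[R]_(n, N)) (y : 'rV[R]_N)
  (r : nat) (hr : xi s X y r < 1 / 2) (Atil A : 'M[R]_(n, s))
  (hT : (norm0 (phi X y Atil) <= r)%N) :
  phi X y A <> phi X y Atil -> J X y Atil < J X y A.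
Proof.
move=> hne.
set a := phi X y A; set b := phi X y Atil.
pose T := [set t | b t != 0].
pose d := fun t => a t - b t.
pose q := (\sum_(t in T) `|d t|) / (\sum_(t < N) `|d t|).
have hq : q < 1 / 2.
  apply: le_lt_trans hr; rewrite /xi; apply: ub_le_sup.
  - exists 1 => z [A1 [A2 [T1 [_ [_ ->]]]]]; exact: ratio_le1.
  - by exists A, Atil, T.
have [t0 ht0] : exists t0, d t0 != 0.
  apply/existsP; apply: contra_notT hne => /existsPn H.
  apply: boolp.funext => t; apply/eqP; rewrite -subr_eq0; move: (H t); rewrite negbK.
  by [].
have hden : 0 < \sum_(t < N) `|d t|.
  rewrite (bigD1 t0) //= ltr_pwDl ?normr_gt0 //; exact: sumr_ge0.
have hnum : \sum_(t in T) `|d t| < (\sum_(t < N) `|d t|) / 2.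
  by move: hq; rewrite /q ltr_pdivrMr // mulrC mul1r.
have pw : forall t, `|b t| + `|d t| - 2 * (if t \in T then `|d t| else 0) <= `|a t|.
  move=> t; case: ifP; rewrite inE.
  - move=> _; have : `|b t| <= `|a t| + `|d t|.
      by have := ler_normB (a t) (a t - b t); rewrite opprB addrC subrK.
    lra.
  - move/negbFE/eqP => hb; rewrite /d hb subr0 normr0 mulr0 subr0 add0r //.
have : \sum_(t < N) (`|b t| + `|d t| - 2 * (if t \in T then `|d t| else 0)) <= J X y A.
  by apply: ler_sum => t _; exact: pw.
rewrite sumrB big_split /= -mulr_sumr -big_mkcond /=.
rewrite /J -/a -/b. lra.
Qed.
Lemma rank_ker (R : realType) (n p : nat) (M : 'M[R]_(n, p)) (v : 'cV[R]_n)
  (hM : \rank M = n) (hv : forall j, \sum_(k < n) M k j * v k 0 = 0) : v = 0.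
Proof.
have rf : row_free M by rewrite /row_free hM.
have : v^T *m M == 0.
  apply/eqP/matrixP => i j; rewrite !mxE; transitivity (\sum_(k < n) M k j * v k 0); last exact: hv j.
  apply: eq_bigr => k _.
  by rewrite !mxE mulrC (ord1 i).
rewrite mulmx_free_eq0 // => /eqP h.
by rewrite -(trmxK v) h trmx0.
Qed.

Lemma nu_ker (R : realType) (n N : nat) (X : 'M[R]_(n, N)) (hrank : \rank X = n)
  (G : {set 'I_N}) (v : 'cV[R]_n) (hG : (nu X <= #|G|)%N)
  (hv : forall t, t \in G -> \sum_(k < n) X k t * v k 0 = 0) : v = 0.
Proof.
have : (nu X == N) || good_m X (nu X).
  rewrite /nu; apply: (big_ind (fun m => (m == N) || good_m X m)).
  - by rewrite eqxx.
  - move=> a b ha hb; rewrite /minn; case: ifP => _ //.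
  - by move=> i ->; rewrite orbT.
case/orP => [/eqP hnu | hgood].
  rewrite hnu in hG.
  have GT : G = [set: 'I_N]%SET.
    by apply/eqP; rewrite eqEcard finset.subsetT cardsT card_ord.
  apply: (@rank_ker _ _ _ X v hrank) => j; apply: hv; by rewrite GT inE.
pose S := [set t in take (nu X) (enum G)].
have hS : #|S| = nu X.
  have -> : #|S| = #|take (nu X) (enum G)| by apply: eq_card => t; rewrite inE.
  have /card_uniqP -> : uniq (take (nu X) (enum G)) by rewrite take_uniq ?enum_uniq.
  by rewrite size_takel // -cardE.
have SG : forall t, t \in S -> t \in G.
  by move=> t; rewrite inE => /mem_take; rewrite mem_enum.
have /eqP hr := implyP (forallP hgood S) (introT eqP hS).
apply: (@rank_ker _ _ _ _ v hr) => j.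

under eq_bigr do rewrite mxE.
apply: hv; apply: SG; exact: enum_valP.
Qed.
Lemma pigeon (N s m : nat) (G : {set 'I_N}) (f : 'I_N -> 'I_s)
  (hs : (0 < s)%N) (hG : (s * m <= #|G|)%N) :
  exists j, (m <= #|[set t in G | f t == j]|)%N.
Proof.
apply/existsP; apply: contraLR hG => /existsPn H.
rewrite -ltnNge.
have e : #|G| = (\sum_(j < s) #|[set t in G | f t == j]|)%N.
  rewrite -sum1_card (partition_big f xpredT) //=.
  apply: eq_bigr => j _; rewrite -sum1_card; apply: eq_bigl => t.
  by rewrite inE.
have hm : (0 < m)%N.
  by move: (H (Ordinal hs)); rewrite -ltnNge; apply: leq_ltn_trans.
have : (#|G| <= \sum_(j < s) m.-1)%N.
  rewrite e; apply: leq_sum => j _; move: (H j); rewrite -ltnNge; lia.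
rewrite sum_nat_const card_ord => h.
apply: (leq_ltn_trans h); rewrite ltn_pmul2l //; lia.
Qed.

Lemma colset_eq (R : realType) (n s N : nat) (X : 'M[R]_(n, N)) (y : 'rV[R]_N)
  (hs : (0 < s)%N) (hrank : \rank X = n) (Atil Ahat : 'M[R]_(n, s))
  (hdist : forall i j : 'I_s, i != j -> col i Atil != col j Atil)
  (hcard : forall i : 'I_s, (s * nu X <= #|Iset X y Atil i|)%N)
  (heq : phi X y Ahat = phi X y Atil) :
  colset Ahat = colset Atil.
Proof.
have [f [hf _]] := @sigma_some _ _ _ _ X y hs Ahat.
have [g [hg _]] := @sigma_some _ _ _ _ X y hs Atil.
have hpA : forall t, phi X y Ahat t = res X y Ahat t (f t).
  by move=> t; rewrite /phi /sigma_at hf.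
have hpT : forall t, phi X y Atil t = res X y Atil t (g t).
  by move=> t; rewrite /phi /sigma_at hg.
have hI : forall i, Iset X y Atil i = [set t | g t == i].
  by move=> i; apply/setP => t; rewrite !inE /sigma_at hg /=.
have ex : forall i, exists j, col i Atil = col j Ahat.
  move=> i; have [j hj] := @pigeon _ _ _ _ f hs (hcard i).
  exists j; apply/eqP; rewrite -subr_eq0; apply/eqP.
  apply: (@nu_ker _ _ _ X hrank _ _ hj) => t; rewrite inE => /andP [].
  rewrite hI inE => /eqP gt /eqP ft.
  have := congr1 (fun F => F t) heq; rewrite /= hpA hpT ft gt /res => h.
  have h2 : \sum_(k < n) X k t * Ahat k j = \sum_(k < n) X k t * Atil k i by lra.
  transitivity (\sum_(k < n) X k t * Atil k i - \sum_(k < n) X k t * Ahat k j).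
    rewrite -sumrB; apply: eq_bigr => k _; by rewrite !mxE mulrBr.
  by rewrite h2 subrr.
pose h i := odflt i [pick j | col i Atil == col j Ahat].
have hh : forall i, col i Atil = col (h i) Ahat.
  move=> i; rewrite /h; case: pickP => [j /eqP //|H].
  by have [j hj] := ex i; move: (H j); rewrite hj eqxx.
have hinj : injective h.
  move=> i1 i2 e; apply/eqP; apply: contraT => /hdist; by rewrite !hh e eqxx.
have [hinv hK1 hK2] := injF_bij hinj.
rewrite /colset; apply/seteqP; split => x [j _ <-].
  by exists (hinv j) => //; rewrite hh hK2.
by exists (h j) => //; rewrite hh.
Qed.

Theorem theorem1 (R : realType) (n s N : nat)
  (X : 'M[R]_(n, N)) (y : 'rV[R]_N)
  (hn : (1 <= n)%N) (hs : (1 <= s)%N) (hN : (1 <= N)%N)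
  (hrank : \rank X = n)
  (hxi : exists r : nat, (r <= N)%N /\ xi s X y r < 1 / 2)
  (Atil : 'M[R]_(n, s))
  (hdist : forall i j : 'I_s, i != j -> col i Atil != col j Atil)
  (hcard : forall i : 'I_s, (s * nu X <= #|Iset X y Atil i|)%N)
  (hsparse : (norm0 (phi X y Atil) <= rstar s X y)%N) :
  Psi s X y = [set colset Atil]%classic.
Proof.
have hstar : xi s X y (rstar s X y) < 1 / 2.
  rewrite /rstar.
  have [|i0 hi0 ->] := @eq_bigmax_cond _ [pred r : 'I_N.+1 | xi s X y r < 1 / 2]
                         (fun r => nat_of_ord r).
    case: hxi => r [hr1 hr2]; apply/card_gt0P.
    by exists (Ordinal (hr1 : (r < N.+1)%N)); rewrite inE.
  by move: hi0; rewrite inE.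
have hkey := @key _ _ _ _ X y _ hstar Atil ^~ hsparse.
have hmin : forall A : 'M[R]_(n, s), J X y Atil <= J X y A.
  move=> A; case: (boolp.pselect (phi X y A = phi X y Atil)) => [e|ne].
    by rewrite /J e.
  exact: ltW (hkey A ne).
apply/seteqP; split => S.
  case=> Ahat [hA ->]; rewrite /=.
  apply: (@colset_eq _ _ _ _ X y hs hrank Atil Ahat hdist hcard).
  case: (boolp.pselect (phi X y Ahat = phi X y Atil)) => [//|ne].
  exfalso; have := hkey Ahat ne; have := hA Atil; lra.
move=> /= ->; by exists Atil.
Qed.
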